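(* Let $\Phi$ be an $m\times n$ matrix with entries in $\{0,1\}$ such that every column contains exactly $d$ ones, and let $G=(A,B,E)$ be the bipartite graph with $A=\{1,\dots,n\}$ (columns), $B=\{1,\dots,m\}$ (rows) and $(i,j)\in E$ iff $\Phi_{j,i}=1$. Suppose that for some scaling factor $S>0$ the matrix $S\Phi$ satisfies the $\mathrm{RIP}_{1,s,\delta}$ property. Then $G$ (whose adjacency matrix is $\Phi$) is an $(s,\epsilon)$-unbalanced expander with $$\epsilon=\Big(1-\frac{1}{1+\delta}\Big)\Big/\big(2-\sqrt2\big).$$
   Context: An $m\times n$ matrix $M$ satisfies $\mathrm{RIP}_{p,k,\delta}$ if for every $k$-sparse $x\in\mathbb{R}^n$ (at most $k$ nonzero coordinates), $\|x\|_p\le\|Mx\|_p\le(1+\delta)\|x\|_p$. A $(k,\epsilon)$-unbalanced expander is a simple bipartite graph $G=(A,B,E)$ in which every vertex of $A$ has exactly $d$ neighbours (left degree $d$) such that for every $X\subseteq A$ with $|X|\le k$, the neighbourhood $N(X)\subseteq B$ satisfies $|N(X)|\ge(1-\epsilon)d|X|$. *)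

(* Defs.v *)
(* Reals are modelled by an arbitrary real closed field R
   (needed for sqrt 2). *)
From HB Require Import structures.
From mathcomp Require Import all_boot all_order all_algebra.
Set Implicit Arguments. Unset Strict Implicit. Unset Printing Implicit Defensive.
Import Order.TTheory GRing.Theory Num.Theory.
Local Open Scope ring_scope.

Definition norm1 (R : numDomainType) (n : nat) (x : 'cV[R]_n) : R :=
  \sum_(i < n) `|x i ord0|.

Definition ksparse (R : numDomainType) (n k : nat) (x : 'cV[R]_n) : Prop :=
  (#|[set i : 'I_n | x i ord0 != 0%R]| <= k)%N.

Definition RIP1 (R : numDomainType) (m n : nat) (M : 'M[R]_(m, n)) (k : nat) (delta : R) : Prop :=
  forall x : 'cV[R]_n, ksparse k x ->
    norm1 x <= norm1 (M *m x) /\ norm1 (M *m x) <= (1 + delta) * norm1 x.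

Definition nbhd (n m : nat) (E : 'I_n -> 'I_m -> bool) (X : {set 'I_n}) : {set 'I_m} :=
  [set b : 'I_m | [exists a in X, E a b]].

Definition unbalanced_expander (R : numDomainType) (n m : nat)
    (E : 'I_n -> 'I_m -> bool) (d k : nat) (eps : R) : Prop :=
  (forall a : 'I_n, #|[set b : 'I_m | E a b]| = d) /\
  (forall X : {set 'I_n}, (#|X| <= k)%N ->
     (1 - eps) * d%:R * #|X|%:R <= #|nbhd E X|%:R).

Definition graph_of (R : numDomainType) (m n : nat) (Phi : 'M[R]_(m, n)) : 'I_n -> 'I_m -> bool :=
  fun i j => Phi j i == 1.

(* Main.v *)
Require Import Defs.
From HB Require Import structures.
From mathcomp Require Import all_boot all_order all_algebra.
Import Order.TTheory GRing.Theory Num.Theory.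
Local Open Scope ring_scope.
Set Implicit Arguments. Unset Strict Implicit. Unset Printing Implicit Defensive.

Definition sgn (R : numDomainType) (b : bool) : R := if b then 1 else -1.

Lemma sgn_sq (R : numDomainType) b : sgn R b * sgn R b = 1.
Proof. by case: b; rewrite /sgn ?mulr1 ?mulrNN ?mulr1. Qed.

Definition flipf n (i : 'I_n) (f : {ffun 'I_n -> bool}) : {ffun 'I_n -> bool} :=
  [ffun t => if t == i then ~~ f t else f t].

Lemma flipfK n (i : 'I_n) : involutive (flipf i).
Proof.
move=> f; apply/ffunP => t; rewrite !ffunE.
by case: eqP => [->|_]; rewrite ?negbK ?eqxx.
Qed.

Lemma sum_sgn2 (R : numDomainType) n (i k : 'I_n) : i != k ->
  \sum_(f : {ffun 'I_n -> bool}) sgn R (f i) * sgn R (f k) = 0.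
Proof.
move=> ik.
set T := \sum_f _.
have : T = - T.
  rewrite {1}/T (reindex_inj (inv_inj (flipfK i))) /= /T -sumrN.
  apply: eq_bigr => f _; rewrite !ffunE eqxx [k == i]eq_sym (negbTE ik).
  by case: (f i); rewrite /sgn /= ?mulN1r ?mul1r ?opprK.
move/eqP; rewrite -subr_eq0 opprK -mulr2n -mulr_natr mulf_eq0 pnatr_eq0 orbF.
by move/eqP.
Qed.

Lemma sum_sq (R : numDomainType) n (C : {set 'I_n}) :
  \sum_(f : {ffun 'I_n -> bool}) (\sum_(i in C) sgn R (f i)) ^+ 2 =
  #|C|%:R * #|{ffun 'I_n -> bool}|%:R.
Proof.
under eq_bigr => f _ do rewrite expr2 mulr_suml.
under eq_bigr => f _ do under eq_bigr => i _ do rewrite mulr_sumr.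
rewrite exchange_big /=.
rewrite -sum1_card natr_sum mulr_suml; apply: eq_bigr => i iC.
rewrite exchange_big /= (bigD1 i) //= [X in _ + X]big1 ?addr0.
  under eq_bigr => f _ do rewrite sgn_sq.
  by rewrite sumr_const mul1r.
by move=> k /andP [_ ki]; rewrite sum_sgn2 // eq_sym.
Qed.

Lemma zid (V : zmodType) (a b c r u o : V) :
  a - b + u - c + b - r + o + o - u - u = a - c + o + o - r - u.
Proof.
rewrite -[a - b + u]addrA [- b + u]addrC addrA -(addrA _ (- c)) (addrC (-c)) addrA subrK.
rewrite (addrAC a u) (addrAC (a - c) u) (addrAC (a - c - r) u) (addrAC (a - c - r + o) u) (addrAC (a - c - r + o + o) u) addrK.
by rewrite (addrAC (a - c) (- r)) (addrAC (a - c + o) (- r)).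
Qed.
Lemma id1 (R : comNzRingType) (u r : R) : (u-1)*((r-1)*u + (r-2)) = (r-1)*(u*u) + (2-r) - u.
Proof.
rewrite mulrDr mulrA [(u-1)*(r-1)]mulrC -mulrA.
rewrite !mulrBr !mulrBl ?mulr1 ?mul1r mulr_natr mulr2n.
rewrite [u*r]mulrC.
rewrite !opprB !opprD !addrA mulrBr.
exact: zid.
Qed.

Lemma sqrt_le_h (R : rcfType) (c : nat) : (0 < c)%N ->
  Num.sqrt (c%:R : R) <= (Num.sqrt 2 - 1) * c%:R + (2 - Num.sqrt 2).
Proof.
move=> c0.
set u := Num.sqrt (c%:R : R); set r := Num.sqrt (2 : R).
have cu : c%:R = u * u by rewrite /u -expr2 sqr_sqrtr ?ler0n.
have rr : r * r = 2 by rewrite /r -expr2 sqr_sqrtr ?ler0n.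
have r1 : 1 <= r.
  by rewrite /r -[X in X <= _]sqrtr1 ler_sqrt // ler1n.
case: c c0 @u cu => [//|[|c]] _ u cu.
  rewrite /u sqrtr1 mulr1.
  by rewrite addrC addrA subrK mulr2n addrK.
have ur : r <= u by rewrite /u /r ler_sqrt // ler_nat.
rewrite cu -subr_ge0 -id1.
apply: mulr_ge0; first by rewrite subr_ge0 (le_trans r1).
rewrite -[r - 2]opprB subr_ge0.
have -> : 2 - r = (r - 1) * r by rewrite mulrBl mul1r rr.
by apply: ler_wpM2l; rewrite // subr_ge0.
Qed.

Lemma amgm (R : rcfType) (t y : R) : 0 <= t -> 2 * t * `|y| <= y ^+ 2 + t ^+ 2.
Proof.
move=> t0.
have := sqr_ge0 (`|y| - t).
rewrite sqrrB real_normK ?num_real // addrAC subr_ge0.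
by rewrite -mulrA mulr_natl mulrC.
Qed.

Definition hfun (R : rcfType) (c : nat) : R := (Num.sqrt 2 - 1) * c%:R + (2 - Num.sqrt 2).

Lemma row_bound (R : rcfType) n (C : {set 'I_n}) : (0 < #|C|)%N ->
  \sum_(f : {ffun 'I_n -> bool}) `|\sum_(i in C) sgn R (f i)| <=
  #|{ffun 'I_n -> bool}|%:R * hfun R #|C|.
Proof.
move=> C0.
set u := Num.sqrt (#|C|%:R : R).
set N := (#|{ffun 'I_n -> bool}|%:R : R).
have u0 : 0 < u by rewrite /u sqrtr_gt0 ltr0n.
have cu : #|C|%:R = u ^+ 2 by rewrite /u sqr_sqrtr ?ler0n.
apply: (@le_trans _ _ (N * u)); last first.
  by apply: ler_wpM2l; [rewrite /N ler0n | exact: sqrt_le_h].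
have h2u : 0 < 2 * u by rewrite mulr_gt0 // ltr0n.
rewrite -(ler_pM2l h2u) mulr_sumr.
apply: (@le_trans _ _ (\sum_(f : {ffun 'I_n -> bool}) ((\sum_(i in C) sgn R (f i)) ^+ 2 + u ^+ 2))).
  apply: ler_sum => f _; apply: amgm; exact: ltW.
have cs : \sum_(f : {ffun 'I_n -> bool}) u ^+ 2 = u ^+ 2 * N.
  by rewrite sumr_const /N mulr_natr.
rewrite big_split /= sum_sq cs -cu.
rewrite -/N -mulr2n -mulr_natl cu expr2 -!mulrA [N * u]mulrC.
by rewrite mul1r mulr_natl.
Qed.
Lemma final_alg (R : rcfType) (S q Xc D Nn a G : R) : 0 < S -> 0 < Xc -> 0 < a ->
  Xc <= S * G -> S * D <= q * Xc -> Xc <= S * D -> G = D - a * (D - Nn) ->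
  (1 - (1 - q^-1) / a) * D <= Nn.
Proof.
move=> S0 X0 a0 h1 h2 h3 hG.
have q1 : 1 <= q.
  by rewrite -(ler_pM2r X0) mul1r (le_trans h3 h2).
have q0 : 0 < q by rewrite (lt_le_trans ltr01 q1).
have DG : D <= q * G.
  rewrite -(ler_pM2l S0) mulrCA (le_trans h2) // ler_pM2l //.
have s1 : D / q <= G by rewrite ler_pdivrMr // mulrC.
rewrite hG lerBrDr -lerBrDl in s1.
rewrite mulrBl mul1r lerBlDr -lerBlDl.
rewrite mulrAC ler_pdivlMr // mulrC mulrBl mul1r [q^-1 * D]mulrC.
exact: s1.
Qed.

Lemma mulcol (R : rcfType) m n (Phi : 'M[R]_(m,n)) (S : R) (X : {set 'I_n})
  (v : 'I_n -> R) (j : 'I_m) :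
  (forall j i, Phi j i = 0 \/ Phi j i = 1) ->
  ((S *: Phi) *m (\col_i (if i \in X then v i else 0))) j ord0 =
  S * \sum_(i in [set i in X | Phi j i == 1]) v i.
Proof.
move=> H01; rewrite mxE mulr_sumr [X in _ = X]big_mkcond /=; apply: eq_bigr => i _.
rewrite !mxE inE; case: (H01 j i) => ->.
  by rewrite eq_sym oner_eq0 andbF mulr0 mul0r.
by rewrite eqxx andbT mulr1; case: (i \in X); rewrite ?mulr0.
Qed.

Lemma norm_col (R : rcfType) n (X : {set 'I_n}) (v : 'I_n -> R) :
  (forall i, `|v i| = 1) ->
  norm1 (\col_i (if i \in X then v i else 0)) = #|X|%:R.
Proof.
move=> hv; rewrite /norm1.
rewrite (eq_bigr (fun i => if i \in X then 1 else 0)); last first.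
  by move=> i _; rewrite mxE; case: (i \in X); rewrite ?hv ?normr0.
by rewrite -big_mkcond /= sumr_const.
Qed.

Lemma sparse_col (R : rcfType) n s (X : {set 'I_n}) (v : 'I_n -> R) :
  (#|X| <= s)%N -> ksparse s (\col_i (if i \in X then v i else 0)).
Proof.
move=> H; rewrite /ksparse; apply: leq_trans H; apply: subset_leq_card.
by apply/subsetP => i; rewrite !inE mxE; case: (i \in X); rewrite ?eqxx.
Qed.

Lemma card_sumb (T : finType) (A : {pred T}) : #|A| = (\sum_(i : T) (i \in A))%N.
Proof.
by rewrite -sum1_card big_mkcond /=; apply: eq_bigr => i _; case: (i \in A).
Qed.

Lemma dcount (R : rcfType) m n (Phi : 'M[R]_(m,n)) (X : {set 'I_n}) d :
  (forall i, #|[set j | Phi j i == 1]| = d) ->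
  (\sum_(j < m) #|[set i in X | Phi j i == 1%R]| = #|X| * d)%N.
Proof.
move=> Hd.
rewrite (eq_bigr (fun j => \sum_i ((i \in X) && (Phi j i == 1%R) : nat))%N); last first.
  by move=> j _; rewrite card_sumb; apply: eq_bigr => i _; rewrite inE.
rewrite exchange_big /=.
rewrite (eq_bigr (fun i => (i \in X : nat) * d)%N); last first.
  move=> i _; case: (i \in X) => /=.
    by rewrite mul1n -(Hd i) card_sumb; apply: eq_bigr => j _; rewrite inE.
  by rewrite mul0n big1.
by rewrite -big_distrl /= -card_sumb.
Qed.

Lemma nbhd_card (R : rcfType) m n (Phi : 'M[R]_(m,n)) (X : {set 'I_n}) :
  #|nbhd (graph_of Phi) X| = #|[set j | (0 < #|[set i in X | Phi j i == 1%R]|)%N]|.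
Proof.
apply: eq_card => j; rewrite !inE card_gt0.
apply/existsP/set0Pn => [[a /andP [aX ha]] | [a]].
  by exists a; rewrite inE aX.
by rewrite inE => /andP [aX ha]; exists a; rewrite aX.
Qed.

Lemma sumG (R : rcfType) m (c : 'I_m -> nat) :
  \sum_(j < m) (if (0 < c j)%N then hfun R (c j) else 0) =
  (Num.sqrt 2 - 1) * (\sum_(j < m) c j)%N%:R +
  (2 - Num.sqrt 2) * #|[set j | (0 < c j)%N]|%:R.
Proof.
rewrite (eq_bigr (fun j => (Num.sqrt 2 - 1) * (c j)%:R +
   (2 - Num.sqrt 2) * ((0 < c j)%N : nat)%:R)); last first.
  move=> j _; case: (posnP (c j)) => [->|cp]; first by rewrite /= !mulr0 addr0.
  by rewrite /hfun mulr1.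
by rewrite big_split /= -!mulr_sumr -!natr_sum -card_sumb; congr (_ + _ * _%:R);
  apply: eq_card => j; rewrite inE.
Qed.

Unset Implicit Arguments.

Theorem theorem2 (R : rcfType) (m n d s : nat) (Phi : 'M[R]_(m, n)) (S delta : R) :
  (forall (j : 'I_m) (i : 'I_n), Phi j i = 0 \/ Phi j i = 1) ->
  (forall i : 'I_n, #|[set j : 'I_m | Phi j i == 1]| = d) ->
  0 < S ->
  RIP1 (S *: Phi) s delta ->
  unbalanced_expander (graph_of Phi) d s
    ((1 - (1 + delta)^-1) / (2 - Num.sqrt 2)).
Proof.
move=> H01 Hd S0 Hrip; split; first exact: Hd.
move=> X Xs.
case: (posnP #|X|) => [X0 | Xpos].
  by rewrite X0 mulr0 ler0n.
set C := fun j => [set i in X | Phi j i == 1].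
set D := (\sum_(j < m) #|C j|)%N.
have DX : D = (#|X| * d)%N by apply: dcount.
set a := 2 - Num.sqrt (2 : R).
have a0 : 0 < a.
  rewrite /a subr_gt0 -[X in _ < X](@ger0_norm _ 2) // -sqrtr_sqr ltr_sqrt //.
    by rewrite expr2 -natrM ltr_nat.
  by rewrite exprn_gt0.
set G := \sum_(j < m) (if (0 < #|C j|)%N then hfun R #|C j| else 0).
set Nn := #|[set j | (0 < #|C j|)%N]|.
have hG : G = D%:R - a * (D%:R - Nn%:R).
  rewrite /G sumG -/D -/Nn /a.
  rewrite mulrBr opprB [_ * Nn%:R - _]addrC addrA; congr (_ + _).
  rewrite -{2}[D%:R]mul1r -mulrBl; congr (_ * _).
  by rewrite opprB addrCA mulr2n opprD addrA addrA addrK.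
set N := (#|{ffun 'I_n -> bool}|%:R : R).
set T := fun f : {ffun 'I_n -> bool} => \sum_(j < m) `|\sum_(i in C j) sgn R (f i)|.
have tot : \sum_f T f <= N * G.
  rewrite /T exchange_big /= /G mulr_sumr; apply: ler_sum => j _.
  case: (posnP #|C j|) => [c0 | cp].
    rewrite (cards0_eq c0) /= mulr0 big1 // => f _.
    by rewrite big_set0 normr0.
  by apply: row_bound.
have [f hf] : exists f, T f <= G.
  case: (boolP [exists f, T f <= G]) => [/existsP // | /existsPn hn].
  have : N * G < \sum_f T f.
    have -> : N * G = \sum_(f : {ffun 'I_n -> bool}) G.
      by rewrite sumr_const mulrC /N mulr_natr.
    apply: ltr_sum; last by move=> f _; rewrite ltNge; apply: hn.
    by apply/hasP; exists [ffun=> true]; rewrite ?mem_index_enum.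
  by rewrite ltNge tot.
set xs := \col_i (if i \in X then sgn R (f i) else 0).
set xi := \col_i (if i \in X then (1 : R) else 0).
have [l1 _] := Hrip xs (sparse_col _ Xs).
have [l2 u2] := Hrip xi (sparse_col _ Xs).
have nxs : norm1 xs = #|X|%:R.
  by apply: norm_col => i; case: (f i); rewrite /sgn ?normrN normr1.
have nxi : norm1 xi = #|X|%:R by apply: norm_col => i; rewrite normr1.
have nMxs : norm1 ((S *: Phi) *m xs) = S * T f.
  rewrite /norm1 /T mulr_sumr; apply: eq_bigr => j _.
  by rewrite mulcol // normrM gtr0_norm.
have nMxi : norm1 ((S *: Phi) *m xi) = S * D%:R.
  rewrite /norm1 /D natr_sum mulr_sumr; apply: eq_bigr => j _.
  by rewrite mulcol // sumr_const normrM gtr0_norm // normr_nat.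
rewrite nxs nMxs in l1; rewrite nxi nMxi in l2 u2.
have l1' : #|X|%:R <= S * G.
  by apply: (le_trans l1); rewrite ler_pM2l.
have := final_alg S0 _ a0 l1' u2 l2 hG.
rewrite ltr0n; move/(_ Xpos).
rewrite nbhd_card -/C -/Nn DX natrM -mulrA [_ * d%:R]mulrC.
by [].
Qed.
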